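(* Let $n\ge 1$, $0\le t$, $l\ge 0$ with $t+l\le n$, and let $C_1\subseteq\mathbb F_2^n$ be a linear code of dimension $t$. Let $C_2(X)$ be a random linear code of dimension $t+l$ with $C_1\subseteq C_2(X)\subseteq\mathbb F_2^n$, whose distribution satisfies: for every $x\in\mathbb F_2^n\setminus C_1$, $$\Pr_X[x\in C_2(X)]=\frac{2^{l+t}-2^t}{2^n-2^t}.$$ Then for every additive channel $W$ on $\mathbb F_2^n$ with noise distribution $P_W$, $$\mathbb E_X\big[1-P_W(\Gamma_{C_2(X)}+C_1)\big]\le \sum_{k=0}^n \tilde P_W(k)\, g(2^{l+t-n}\mid n,k).$$
   Context: For $x\in\mathbb F_2^n$, $|x|$ is its Hamming weight and $T_n^k=\{x\in\mathbb F_2^n:|x|=k\}$. $h(p)=-p\log_2p-(1-p)\log_2(1-p)$ is the binary entropy. An additive channel $W$ on $\mathbb F_2^n$ is one with $W(y|x)=P_W(y-x)$ for a probability distribution $P_W$ on $\mathbb F_2^n$; set $\tilde P_W(k)=P_W(T_n^k)$. For a linear code $C_2\subseteq\mathbb F_2^n$, $\Gamma_{C_2}\subseteq\mathbb F_2^n$ denotes a set of coset representatives of $\mathbb F_2^n/C_2$ obtained by choosing in each coset $[x]_2=x+C_2$ an element of minimum Hamming weight, i.e. $\Gamma([x]_2)=x+\operatorname{argmin}_{x_2\in C_2}|x+x_2|$ (ties broken arbitrarily); $\Gamma_{C_2}+C_1=\{\gamma+c:\gamma\in\Gamma_{C_2},c\in C_1\}$. The quantity $1-P_W(\Gamma_{C_2}+C_1)$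 is the error probability of transmitting $C_2/C_1$ with minimum-distance coset decoding. Define $g(x\mid n,k)=\min\{2^{nh(k/n)}x,1\}$ if $k\le\lfloor n/2\rfloor$ and $g(x\mid n,k)=1$ if $k>\lfloor n/2\rfloor$. *)

(* Defs.v *)
From HB Require Import structures.
From mathcomp Require Import all_boot all_order all_algebra.
From mathcomp Require Import reals exp.
Set Implicit Arguments. Unset Strict Implicit. Unset Printing Implicit Defensive.
Import Order.TTheory GRing.Theory Num.Theory.
Local Open Scope ring_scope.

(* F_2^n is modelled as row vectors 'rV['F_2]_n; linear codes are
   subspaces {vspace 'rV['F_2]_n}. *)
Notation vecF2 n := 'rV['F_2]_n.

Definition hwt (n : nat) (x : vecF2 n) : nat := #|[set i : 'I_n | x ord0 i != 0]|.

Definition Tnk (n k : nat) : {set vecF2 n} := [set x | hwt x == k].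

(* x * log2 x with the convention 0 log 0 = 0 *)
Definition xlog2 {R : realType} (x : R) : R :=
  if x == 0 then 0 else x * (ln x / ln 2).

Definition binent {R : realType} (p : R) : R := - xlog2 p - xlog2 (1 - p).

Definition gfun {R : realType} (x : R) (n k : nat) : R :=
  if (k <= n./2)%N
  then Num.min (2 `^ (n%:R * binent (k%:R / n%:R)) * x) 1
  else 1.

Definition probset {R : realType} (n : nat) (P : vecF2 n -> R) (S : {set vecF2 n}) : R :=
  \sum_(y in S) P y.

Definition Ptilde {R : realType} (n : nat) (P : vecF2 n -> R) (k : nat) : R :=
  probset P (Tnk n k).

Definition is_distr {R : realType} (T : finType) (P : T -> R) : Prop :=
  (forall x, 0 <= P x) /\ \sum_x P x = 1.

(* G is a set of minimum-weight coset representatives of F_2^n / C: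
   each coset x + C contains exactly one element of G, and each element
   of G has minimum Hamming weight within its coset (ties arbitrary). *)
Definition min_coset_reps (n : nat) (C : {vspace vecF2 n}) (G : {set vecF2 n}) : Prop :=
  (forall x : vecF2 n, #|[set y in G | (y - x) \in C]| = 1%N) /\
  (forall y, y \in G -> forall c, c \in C -> (hwt y <= hwt (y + c))%N).

Definition coset_sum (n : nat) (G : {set vecF2 n}) (C1 : {vspace vecF2 n}) : {set vecF2 n} :=
  [set x | [exists g in G, [exists c, (c \in C1) && (x == g + c)]]].

(* Main.v *)
Require Import Defs.
From HB Require Import structures.
From mathcomp Require Import all_boot all_order all_algebra.
From mathcomp Require Import reals exp.
From mathcomp Require Import sequences.
From mathcomp Require Import ring lra zify.
Import Order.TTheory GRing.Theory Num.Theory.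
Local Open Scope ring_scope.

Lemma F2cases (b : 'F_2) : b = 0 \/ b = 1.
Proof. case: b => [[|[|m]]] H. left; exact/val_inj. right; exact/val_inj. done. Qed.

Lemma sumF2 (R : realType) (f : 'F_2 -> R) : \sum_b f b = f 0 + f 1.
Proof.
rewrite (bigD1 0) //= (bigD1 1) //= big1 ?addr0 // => b /andP[b1 b0].
by case: (F2cases b) b1 b0 => ->; rewrite eqxx.
Qed.

Lemma hwt_le n (y : vecF2 n) : (hwt y <= n)%N.
Proof. by have := max_card [set i | y ord0 i != 0]; rewrite card_ord. Qed.

Lemma prod_if (R : realType) n (c : pred 'I_n) (p q : R) :
  \prod_(j < n) (if c j then p else q) = p ^+ #|c| * q ^+ (n - #|c|).
Proof.
rewrite (bigID c) /=.
under eq_bigr => j hj do rewrite hj.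
under [X in _ * X]eq_bigr => j hj do rewrite (negbTE hj).
rewrite !prodr_const; congr (_ * _ ^+ _).
have := cardC c; rewrite card_ord => H.
apply/eqP; rewrite -(eqn_add2l #|c|) subnKC; last by apply: leq_trans (leq_addr _ _) (eq_leq H).
apply/eqP; apply: etrans H; congr (_ + _)%N; by apply: eq_card => i; rewrite !inE.
Qed.

Lemma sum_weight (R : realType) n (p : R) :
  \sum_(y : vecF2 n) p ^+ hwt y * (1 - p) ^+ (n - hwt y) = 1.
Proof.
have E : forall y : vecF2 n, p ^+ hwt y * (1 - p) ^+ (n - hwt y) =
   \prod_(j < n) (if y ord0 j != 0 then p else 1 - p).
  move=> y; rewrite prod_if; suff -> : hwt y = #|[pred j | y ord0 j != 0]| by [].
  by rewrite /hwt; apply: eq_card => j; rewrite inE.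
rewrite (eq_bigr _ (fun y _ => E y)).
rewrite (reindex (fun f : {ffun 'I_n -> 'F_2} => \row_j f j)) /=; last first.
  exists (fun y : vecF2 n => [ffun j => y ord0 j]) => f _.
    by apply/ffunP => j; rewrite ffunE mxE.
  by apply/rowP => j; rewrite mxE ffunE.
rewrite (eq_bigr (fun f : {ffun 'I_n -> 'F_2} =>
   \prod_(j < n) (fun (j : 'I_n) (b : 'F_2) => if b != 0 then p else 1 - p) j (f j))); last first.
  by move=> f _; apply: eq_bigr => j _; rewrite mxE.
rewrite -(bigA_distr_bigA (fun (j : 'I_n) (b : 'F_2) => if b != 0 then p else 1 - p)) /=.
rewrite big1 // => j _; rewrite sumF2 /=.
by rewrite subrK.
Qed.

Lemma card_ball (R : realType) n k : (1 <= n)%N -> (k <= n./2)%N ->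
  (#|[set y : vecF2 n | (hwt y <= k)%N]|%:R : R) <= 2 `^ (n%:R * binent (k%:R / n%:R)).
Proof.
move=> n1 kn.
have k2n : (k.*2 <= n)%N by rewrite -geq_half_double.
have kn' : (k <= n)%N by rewrite -addnn in k2n; lia.
set S := [set y : vecF2 n | (hwt y <= k)%N].
set p : R := k%:R / n%:R.
have n0 : (0:R) < n%:R by rewrite ltr0n.
have p0 : 0 <= p by rewrite divr_ge0.
have pp : p + p <= 1.
  by rewrite /p -mulrDl ler_pdivrMr // mul1r -natrD addnn ler_nat.
have pq : p <= 1 - p by lra.
set m := p ^+ k * (1 - p) ^+ (n - k).
have Hm : #|S|%:R * m <= 1.
  rewrite mulr_natl -sumr_const -[X in _ <= X](sum_weight R n p).
  apply: (@le_trans _ _ (\sum_(y in S) p ^+ hwt y * (1 - p) ^+ (n - hwt y))).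
    apply: ler_sum => y; rewrite inE => hy.
    have e1 : p ^+ k = p ^+ hwt y * p ^+ (k - hwt y) by rewrite -exprD subnKC.
    have e2 : (1-p) ^+ (n - hwt y) = (1-p) ^+ (k - hwt y) * (1-p) ^+ (n - k).
      by rewrite -exprD; congr (_ ^+ _); lia.
    rewrite /m e1 e2 -mulrA ler_wpM2l ?exprn_ge0 //.
    rewrite ler_wpM2r ?exprn_ge0 //; first lra.
    by apply: lerXn2r => //; rewrite nnegrE //; lra.
  rewrite [X in _ <= X](bigID (mem S)) /= lerDl sumr_ge0 // => y _.
  by rewrite mulr_ge0 // exprn_ge0 //; lra.
have Hk : 2 `^ (n%:R * binent p) * m = 1.
  case: (posnP k) => [k0|kpos].
    rewrite /m /p k0 mul0r expr0 mul1r subr0 expr1n /binent /xlog2 eqxx subr0 oner_eq0.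
    by rewrite ln1 !(mul0r, mulr0, subr0, oppr0, sub0r) powRr0 mulr1.
  have pp0 : 0 < p by rewrite divr_gt0 // ltr0n.
  have qq0 : 0 < 1 - p by lra.
  rewrite /binent /xlog2 (negbTE (lt0r_neq0 pp0)) (negbTE (lt0r_neq0 qq0)).
  rewrite /powR pnatr_eq0 /=.
  have ep : p ^+ k = expR (k%:R * ln p) by rewrite expRM_natl lnK // posrE.
  have eq : (1 - p) ^+ (n - k) = expR ((n - k)%:R * ln (1 - p)) by rewrite expRM_natl lnK // posrE.
  rewrite /m ep eq -!expRD -[X in _ = X]expR0; congr expR.
  have l2 : 0 < ln (2 : R) by rewrite ln_gt0 // ltr1n.
  move: (ln p) (ln (1 - p)) (ln (2:R)) l2 => a b c c0.
  rewrite natrB // /p. field.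
  by rewrite (lt0r_neq0 c0) (lt0r_neq0 n0).
have -> : (#|S|%:R : R) = 2 `^ (n%:R * binent p) * (#|S|%:R * m) by rewrite mulrCA Hk mulr1.
by rewrite ler_piMr // powR_ge0.
Qed.

Lemma decode n (C1 C2 : {vspace vecF2 n}) (G : {set vecF2 n}) e :
  min_coset_reps C2 G -> e \notin coset_sum G C1 ->
  exists y, [/\ y \notin C1, y \in C2 & (hwt (e + y) <= hwt e)%N].
Proof.
case=> H1 H2 He.
have /cards1P [g Hg] : #|[set y in G | (y - e) \in C2]| == 1%N by rewrite H1.
have : g \in [set y in G | (y - e) \in C2] by rewrite Hg set11.
rewrite inE => /andP [gG gC2].
exists (g - e); split => //.
- apply/negP => gC1; apply: (negP He); rewrite inE.
  apply/existsP; exists g; rewrite gG /=.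
  apply/existsP; exists (e - g); rewrite -opprB memvN gC1 /=.
  by rewrite opprB addrCA subrr addr0.
- rewrite addrCA subrr addr0.
  have := H2 g gG (e - g); rewrite -opprB memvN gC2 => /(_ isT).
  by rewrite opprB addrCA subrr addr0.
Qed.

Lemma rho_bound (R : realType) n t l : (t + l <= n)%N ->
  0 <= ((2:R) ^+ (l + t) - 2 ^+ t) / (2 ^+ n - 2 ^+ t) /\
  ((2:R) ^+ (l + t) - 2 ^+ t) / (2 ^+ n - 2 ^+ t) <= 2 ^+ (l + t) / 2 ^+ n.
Proof.
move=> tln.
have e : forall m, (2:R) ^+ m = (2 ^ m)%:R by move=> m; rewrite natrX.
have hA : (2:R) ^+ t <= 2 ^+ (l + t) by rewrite !e ler_nat leq_exp2l // leq_addl.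
have hB : (2:R) ^+ (l + t) <= 2 ^+ n by rewrite !e ler_nat leq_exp2l //; lia.
have h0 : (0:R) < 2 ^+ t by rewrite exprn_gt0.
have hn : (0:R) < 2 ^+ n by rewrite exprn_gt0.
have hx : 0 <= (2:R) ^+ (l + t) / 2 ^+ n by rewrite divr_ge0 // exprn_ge0.
case: (ltnP t n) => tn.
  have hT : (2:R) ^+ t < 2 ^+ n by rewrite !e ltr_nat ltn_exp2l.
  split; first by rewrite divr_ge0 //; lra.
  rewrite ler_pdivrMr; last by lra.
  rewrite mulrBr.
  have : 2 ^+ (l + t) / 2 ^+ n * 2 ^+ t <= (2:R) ^+ t.
    by rewrite ler_piMl ?exprn_ge0 // ler_pdivrMr // mul1r.
  have -> : (2:R) ^+ (l + t) / 2 ^+ n * 2 ^+ n = 2 ^+ (l + t) by rewrite divfK // lt0r_neq0.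
  lra.
have -> : (l + t = t)%N by lia.
by rewrite subrr mul0r; split => //; rewrite divr_ge0 ?exprn_ge0.
Qed.

Theorem lemma1 (R : realType) (n t l : nat)
  (C1 : {vspace 'rV['F_2]_n})
  (X : finType) (pX : X -> R) (C2 : X -> {vspace 'rV['F_2]_n})
  (Gam : X -> {set 'rV['F_2]_n}) (PW : 'rV['F_2]_n -> R) :
  (1 <= n)%N -> (t + l <= n)%N ->
  \dim C1 = t ->
  is_distr pX ->
  (forall i, pX i != 0 -> (C1 <= C2 i)%VS /\ \dim (C2 i) = (t + l)%N) ->
  (forall x : 'rV['F_2]_n, x \notin C1 ->
     \sum_(i | x \in C2 i) pX i
     = (2 ^+ (l + t) - 2 ^+ t) / (2 ^+ n - 2 ^+ t)) ->
  (forall i, min_coset_reps (C2 i) (Gam i)) ->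
  is_distr PW ->
  \sum_i pX i * (1 - probset PW (coset_sum (Gam i) C1))
  <= \sum_(k < n.+1) Ptilde PW k * gfun (2 ^+ (l + t) / 2 ^+ n) n k.
Proof.
move=> n1 tln _ [pX0 pX1] _ Hrho Hmin [PW0 PW1].
set x : R := 2 ^+ (l + t) / 2 ^+ n.
set rho : R := (2 ^+ (l + t) - 2 ^+ t) / (2 ^+ n - 2 ^+ t).
have [rho0 rhox] := rho_bound R n t l tln.
have x0 : 0 <= x by rewrite divr_ge0 ?exprn_ge0.
set S := fun i => coset_sum (Gam i) C1.
have stepA : forall i, 1 - probset PW (S i) = \sum_e PW e * (e \notin S i)%:R.
  move=> i; rewrite [RHS](bigID (mem (S i))) /= [X in _ = X + _]big1 ?add0r; last by move=> e ->; rewrite mulr0.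
  rewrite (eq_bigr PW); last by move=> e he; rewrite he mulr1.
  by rewrite -[X in X - _]PW1 /probset (bigID (mem (S i))) /= addrC addrK.
rewrite (eq_bigr _ (fun i _ => congr1 (fun z => pX i * z) (stepA i))).
under eq_bigr do rewrite mulr_sumr.
rewrite exchange_big /=.
have stepC : \sum_(k < n.+1) Ptilde PW k * gfun x n k = \sum_e PW e * gfun x n (hwt e).
  rewrite /Ptilde /probset.
  under eq_bigr do rewrite mulr_suml.
  under eq_bigr do rewrite big_mkcond.
  rewrite exchange_big /=; apply: eq_bigr => e _.
  have he : (hwt e < n.+1)%N by rewrite ltnS hwt_le.
  rewrite (bigD1 (Ordinal he)) //= inE eqxx big1 ?addr0 // => k hk.
  rewrite inE; case: eqP => // hk'; case/eqP: hk; exact/val_inj.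
rewrite stepC; apply: ler_sum => e _.
rewrite (eq_bigr (fun i => PW e * (pX i * (e \notin S i)%:R))); last first.
  by move=> i _; rewrite mulrCA.
rewrite -mulr_sumr; apply: ler_wpM2l => //.
have ind01 : forall i, 0 <= ((e \notin S i)%:R : R) /\ ((e \notin S i)%:R : R) <= 1.
  by move=> i; case: (e \notin S i).
have D1 : \sum_i pX i * (e \notin S i)%:R <= 1.
  rewrite -[X in _ <= X]pX1; apply: ler_sum => i _; apply: ler_piMr; [exact: pX0 | by case: (e \notin S i)].
rewrite /gfun; case: ifP => // hk.
rewrite le_min D1 andbT.
set B := [set y : vecF2 n | (y \notin C1) && (hwt (e + y) <= hwt e)%N].
apply: (@le_trans _ _ (\sum_i pX i * \sum_(y in B) (y \in C2 i)%:R)).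
  apply: ler_sum => i _; apply: ler_wpM2l => //.
  case: (boolP (e \in S i)) => hS /=.
    by rewrite sumr_ge0 // => y _; case: (_ \in _).
  have [y [yC1 yC2 yw]] := decode n C1 (C2 i) (Gam i) e (Hmin i) hS.
  rewrite (bigD1 y) /=; last by rewrite inE yC1 yw.
  by rewrite yC2 lerDl sumr_ge0 // => z _; case: (_ \in _).
under eq_bigr do rewrite mulr_sumr.
rewrite exchange_big /=.
rewrite (eq_bigr (fun _ => rho)); last first.
  move=> y; rewrite inE => /andP [yC1 _].
  rewrite /rho -(Hrho y yC1) [RHS]big_mkcond; apply: eq_bigr => i _.
  by case: (_ \in _); rewrite ?mulr1 ?mulr0.
rewrite sumr_const -[rho *+ _]mulr_natl.
apply: (@le_trans _ _ (#|B|%:R * x));  first by apply: ler_wpM2l; [exact: ler0n | exact: rhox].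
have cB : (#|B| <= #|[set y : vecF2 n | (hwt y <= hwt e)%N]|)%N.
  rewrite -(card_imset _ (addrI e)); apply: subset_leq_card.
  apply/subsetP => z /imsetP [y yB ->]; move: yB; rewrite /B !inE => /andP [_ hy].
  by [].
rewrite mulrC [X in _ <= X]mulrC; apply: ler_wpM2l => //.
apply: le_trans (card_ball R n (hwt e) n1 hk).
by rewrite ler_nat.
Qed.
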